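(* Let $q$ be a prime power and let $d,\tau,n,m$ be integers with $\lfloor (d-1)/2\rfloor\le\tau<d\le n\le m$. Let $\mathcal C\subseteq\mathbb F_{q^m}^n$ be any (not necessarily linear) code with minimum rank distance $d$. Then $$\ell=\max_{\mathbf r\in\mathbb F_{q^m}^n}|\mathcal C\cap\mathcal B_\tau(\mathbf r)|\ \le\ 1+\sum_{t=\lfloor (d-1)/2\rfloor+1}^{\tau}\frac{\binom{n}{2t+1-d}_q}{\binom{t}{2t+1-d}_q}\ \le\ 1+4\sum_{t=\lfloor (d-1)/2\rfloor+1}^{\tau}q^{(2t-d+1)(n-t)}$$ $$\le\ 1+4\Big(\tau-\big\lfloor\tfrac{d-1}{2}\big\rfloor\Big)\,q^{(2\tau-d+1)(n-\lfloor (d-1)/2\rfloor-1)}.$$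
   Context: Fixing a basis of $\mathbb F_{q^m}$ over $\mathbb F_q$, each vector $\mathbf x\in\mathbb F_{q^m}^n$ is identified with an $m\times n$ matrix over $\mathbb F_q$; $\mathrm{rk}(\mathbf x)$ is the rank of this matrix and the rank distance is $\mathrm{rk}(\mathbf x-\mathbf y)$. The minimum rank distance of $\mathcal C$ is $\min\{\mathrm{rk}(\mathbf c_1-\mathbf c_2):\mathbf c_1\ne\mathbf c_2\in\mathcal C\}$. $\mathcal B_\tau(\mathbf r)=\{\mathbf x:\mathrm{rk}(\mathbf x-\mathbf r)\le\tau\}$. The Gaussian binomial is $\binom{n}{r}_q=\prod_{i=0}^{r-1}\frac{q^n-q^i}{q^r-q^i}$. *)

(* Defs.v *)
From HB Require Import structures.
From mathcomp Require Import all_boot all_order all_algebra all_field.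
From mathcomp Require Import finmap.
Set Implicit Arguments. Unset Strict Implicit. Unset Printing Implicit Defensive.
Import Order.TTheory GRing.Theory Num.Theory.
Local Open Scope ring_scope.

(* F plays the role of F_q, L the role of F_{q^m} (an extension of F of
   degree \dim {:L}). *)
Definition coord_mx (F : finFieldType) (L : fieldExtType F) (n : nat)
    (x : 'rV[L]_n) : 'M[F]_(\dim {:L}%VS, n) :=
  \matrix_(i < \dim {:L}%VS, j < n) coord (vbasis {:L}%VS) i (x ord0 j).

Definition rk (F : finFieldType) (L : fieldExtType F) (n : nat)
    (x : 'rV[L]_n) : nat := \rank (coord_mx x).

Definition min_rank_dist (F : finFieldType) (L : fieldExtType F) (n : nat)
    (C : {fset 'rV[L]_n}) (d : nat) : Prop :=
  (forall c1 c2, c1 \in C -> c2 \in C -> c1 != c2 -> (d <= rk (c1 - c2))%N) /\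
  (exists c1 c2, [/\ c1 \in C, c2 \in C, c1 != c2 & rk (c1 - c2) = d]).

Definition code_ball (F : finFieldType) (L : fieldExtType F) (n : nat)
    (C : {fset 'rV[L]_n}) (tau : nat) (r : 'rV[L]_n) : {fset 'rV[L]_n} :=
  [fset c in C | (rk (c - r) <= tau)%N]%fset.

Definition gbin (q n r : nat) : rat :=
  \prod_(i < r) (((q ^ n)%:R - (q ^ i)%:R) / ((q ^ r)%:R - (q ^ i)%:R)).

(* Main.v *)
Require Import Defs.
From HB Require Import structures.
From mathcomp Require Import all_boot all_order all_algebra all_field.
From mathcomp Require Import finmap.
From mathcomp Require Import ring lra zify.
Import Order.TTheory GRing.Theory Num.Theory.
Local Open Scope ring_scope.


Lemma sum_pow_le (Q : rat) j : 2 <= Q -> \sum_(i < j) Q ^+ i <= Q ^+ j.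
Proof.
move=> hQ; elim: j => [|j IH]; first by rewrite big_ord0 expr0.
rewrite big_ord_recr /= exprSr.
have h0 : 0 <= Q ^+ j by rewrite exprn_ge0 //; lra.
nra.
Qed.

Lemma weier k (x : nat -> rat) : (forall i, (i < k)%N -> 0 <= x i <= 1) ->
  1 - \sum_(i < k) x i <= \prod_(i < k) (1 - x i).
Proof.
elim: k => [|k IH] hx; first by rewrite big_ord0 big_ord0; lra.
rewrite big_ord_recr big_ord_recr /=.
have hx' : forall i, (i < k)%N -> 0 <= x i <= 1 by move=> i hi; apply: hx; lia.
have IH' := IH hx'.
have P0 : 0 <= \prod_(i < k) (1 - x i).
  by apply: prodr_ge0 => i _; have := hx' i (ltn_ord i); lra.
have S0 : 0 <= \sum_(i < k) x i.
  by apply: sumr_ge0 => i _; have := hx' i (ltn_ord i); lra.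
have := hx k (ltnSn k); nra.
Qed.

Lemma prod_lb (Q : rat) t k : 2 <= Q -> (k <= t)%N ->
  Q ^+ (t * k) <= 4 * \prod_(i < k) (Q ^+ t - Q ^+ i).
Proof.
move=> hQ; case: k => [|k] hk.
  by rewrite muln0 expr0 big_ord0; lra.
have T0 : 0 < Q ^+ t by rewrite exprn_gt0 //; lra.
have ex : forall i, Q ^+ t - Q ^+ i = Q ^+ t * (1 - Q ^+ i / Q ^+ t).
  by move=> i; field; lra.
under eq_bigr => i _ do rewrite ex.
rewrite big_split /= prodr_const card_ord -exprM.
rewrite big_ord_recr /=.
have hk' : Q ^+ k.+1 <= Q ^+ t by rewrite ler_eXn2l //; lra.
have Qk0 : 0 <= Q ^+ k by rewrite exprn_ge0 //; lra.
have hk2 : 2 * Q ^+ k <= Q ^+ t.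
  by move: hk'; rewrite exprS; nra.
have hx : forall i, (i < k)%N -> 0 <= Q ^+ i / Q ^+ t <= 1.
  move=> i hi; rewrite divr_ge0 ?exprn_ge0 //=; try lra.
  rewrite ler_pdivrMr // mul1r ler_eXn2l //; [lia | lra].
have W := @weier k (fun i => Q ^+ i / Q ^+ t) hx.
have hs : (\sum_(i < k) Q ^+ i) / Q ^+ t <= 1/2.
  rewrite ler_pdivrMr //; have := sum_pow_le Q k hQ; lra.
have hl : Q ^+ k / Q ^+ t <= 1/2 by rewrite ler_pdivrMr //; lra.
rewrite -mulr_suml in W.
have A : 1/2 <= \prod_(i < k) (1 - Q ^+ i / Q ^+ t) by lra.
set P := \prod_(i < k) _ in A *.
set T := Q ^+ (t * k.+1) in T0 *.
have T1 : 0 < T by rewrite /T exprn_gt0 //; lra.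
set y := Q ^+ k / Q ^+ t in hl *.
have B : 1/4 <= P * (1 - y) by nra.
nra.
Qed.


Lemma prod_pos (Q : rat) t k : 2 <= Q -> (k <= t)%N ->
  0 < \prod_(i < k) (Q ^+ t - Q ^+ i).
Proof.
move=> hQ hk; apply: prodr_gt0 => i _; rewrite subr_gt0 ltr_eXn2l //; last lra.
by apply: leq_trans (ltn_ord i) hk.
Qed.

Lemma term_le q n t k : (2 <= q)%N -> (k <= t)%N -> (t <= n)%N ->
  gbin q n k / gbin q t k <= 4 * ((q ^ (k * (n - t)))%N)%:R :> rat.
Proof.
move=> hq hk htn.
have hQ : 2 <= q%:R :> rat by rewrite (ler_nat rat 2 q).
set Q : rat := q%:R in hQ *.
have gE : forall N, gbin q N k = \prod_(i < k) ((Q ^+ N - Q ^+ i) / (Q ^+ k - Q ^+ i)).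
  by move=> N; apply: eq_bigr => i _; rewrite !natrX.
rewrite !gE !prodf_div natrX.
have Pc := prod_pos Q k k hQ (leqnn k).
have Pb := prod_pos Q t k hQ hk.
have Pa := prod_pos Q n k hQ (leq_trans hk htn).
set A := \prod_(i < k) (Q ^+ n - Q ^+ i) in Pa *.
set B := \prod_(i < k) (Q ^+ t - Q ^+ i) in Pb *.
set C := \prod_(i < k) (Q ^+ k - Q ^+ i) in Pc *.
have -> : A / C / (B / C) = A / B.
  by field; apply/andP; split; rewrite gt_eqF.
rewrite ler_pdivrMr //.
have hA : A <= Q ^+ (n * k).
  have -> : Q ^+ (n * k) = \prod_(i < k) Q ^+ n by rewrite prodr_const card_ord exprM.
  apply: ler_prod => i _.
  have h1 : Q ^+ i <= Q ^+ n by rewrite ler_eXn2l; [have := ltn_ord i; lia | lra].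
  have h2 : 0 <= Q ^+ i by rewrite exprn_ge0 //; lra.
  apply/andP; split; lra.
have hB := prod_lb Q t k hQ hk.
have e : (n * k = k * (n - t) + t * k)%N by nia.
rewrite e in hA.
have : 0 < Q ^+ (k * (n - t)) by rewrite exprn_gt0 //; lra.
rewrite exprD in hA.
set X := Q ^+ (k * (n - t)) in hA *.
set Y := Q ^+ (t * k) in hA hB.
move=> X0.
have : X * Y <= X * (4 * B) by rewrite ler_pM2l.
lra.
Qed.


Section Count.
Variable F : finFieldType.

Lemma card_rows p n (U : 'M[F]_(p, n)) :
  #|[set v : 'rV[F]_n | (v <= U)%MS]| = (#|F| ^ \rank U)%N.
Proof.
have -> : [set v : 'rV[F]_n | (v <= U)%MS] = [set w *m row_base U | w in 'rV_(\rank U)].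
  apply/setP => v; rewrite inE; apply/idP/imsetP.
    by rewrite -(eq_row_base U) => /submxP [w ->]; exists w.
  by case=> w _ ->; rewrite -(eq_row_base U) submxMl.
rewrite card_imset; last exact: row_free_inj (row_base_free U).
by rewrite card_mx mul1n.
Qed.

Lemma card_free_in p n (U : 'M[F]_(p, n)) k : (k <= \rank U)%N ->
  #|[set A : 'M[F]_(k, n) | row_free A && (A <= U)%MS]| =
  (\prod_(i < k) (#|F| ^ \rank U - #|F| ^ i))%N.
Proof.
elim: k => [|k IHk] hk.
  rewrite big_ord0 (@eq_card1 _ (0 : 'M_(0, n))) // => A.
  by rewrite !inE flatmx0 eqxx /row_free mxrank0 sub0mx.
rewrite big_ord_recr /= -IHk; last by apply: ltnW.
set S := [set A : 'M[F]_(k, n) | _].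
rewrite -[LHS]sum1_card.
rewrite (partition_big (@dsubmx F 1 k n) (mem S)) /= => [|X]; last first.
  rewrite !inE -{1 2}(vsubmxK X); move: {X}(_ X) (_ X) => Ad Au /andP[Afull].
  rewrite (col_mx_sub Au Ad U) => /andP[_ ->]; rewrite andbT.
  move: Afull; rewrite /row_free => Afull.
  rewrite eqn_leq rank_leq_row -(leq_add2l (\rank Au)) -mxrank_sum_cap.
  have e : \rank (Au + Ad)%MS = k.+1.
    by rewrite addsmxE; apply/eqP.
  by rewrite e; have := rank_leq_row Au; lia.
rewrite -sum_nat_const; apply: eq_bigr => A.
rewrite inE => /andP[rA AU].
rewrite (reindex (col_mx^~ A)) /=; last first.
  exists usubmx => [v _ | vA]; first by rewrite col_mxKu.
  by case/andP=> _ /eqP <-; rewrite vsubmxK.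
transitivity #|[set v : 'rV[F]_n | (v <= U)%MS] :\: [set v : 'rV[F]_n | (v <= A)%MS]|.
  rewrite -sum1_card; apply: eq_bigl => v; rewrite !inE col_mxKd eqxx andbT.
  rewrite (col_mx_sub v A U) AU andbT; congr (_ && _).
  rewrite /row_free eqn_leq rank_leq_row /= -(leq_add2r (\rank (v :&: A)%MS)).
  have e : \rank (col_mx v A) = \rank (v + A)%MS by rewrite addsmxE.
  have h2 : (\rank (v :&: A) < \rank v)%N = ~~ (v <= A)%MS.
    by rewrite (ltn_leqif (mxrank_leqif_sup _)) ?capmxSl // sub_capmx submx_refl.
  have hs := mxrank_sum_cap v A.
  rewrite (eqnP rA) in hs.
  rewrite e leq_add2r -h2; apply/idP/idP => H; lia.
rewrite cardsD (setIidPr _); last first.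
  by apply/subsetP => v; rewrite !inE => /submx_trans; apply.
by rewrite !card_rows (eqnP rA).
Qed.

End Count.


Lemma in_bigcup_seq (T : eqType) (U : finType) (s : seq T) (P : T -> {set U}) X :
  X \in \bigcup_(y <- s) P y -> exists2 y, y \in s & X \in P y.
Proof.
elim: s => [|y s IH]; first by rewrite big_nil inE.
rewrite big_cons in_setU => /orP [H | /IH [z zs H]].
  by exists y => //; rewrite inE eqxx.
by exists z => //; rewrite inE zs orbT.
Qed.

Lemma card_bigcup_seq (T : eqType) (U : finType) (s : seq T) (P : T -> {set U}) :
  uniq s -> {in s &, forall x y, x != y -> P x :&: P y = set0} ->
  (\sum_(x <- s) #|P x|)%N = #|\bigcup_(x <- s) P x|.
Proof.
elim: s => [|x s IH] /=; first by rewrite !big_nil cards0.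
case/andP => xs us hd.
rewrite !big_cons IH //; last first.
  by move=> y z ys zs; apply: hd; rewrite inE ?ys ?zs orbT.
rewrite cardsU.
suff -> : P x :&: \bigcup_(y <- s) P y = set0 by rewrite cards0 subn0.
apply/setP => X; rewrite inE in_set0.
apply/negbTE/andP => [[H1 /in_bigcup_seq [y ys H2]]].
have xy : x != y by apply: contraNneq xs => ->.
have := hd x y; rewrite !inE eqxx ys orbT => /(_ isT isT xy) /setP /(_ X).
by rewrite inE H1 H2 in_set0.
Qed.

Lemma sum_const_seq (T : Type) (s : seq T) (K : nat) :
  (\sum_(x <- s) K)%N = (size s * K)%N.
Proof. by elim: s => [|x s IH]; rewrite ?big_nil ?big_cons ?IH ?mulSn. Qed.

Section Rank.
Variables (F : finFieldType) (L : fieldExtType F) (n : nat).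
Implicit Types x y c r : 'rV[L]_n.

Lemma coord_mxB x y : coord_mx (x - y) = coord_mx x - coord_mx y.
Proof. by apply/matrixP => i j; rewrite !mxE linearB. Qed.

Lemma rk_sub_le c1 c2 r :
  (rk (c1 - c2) <= \rank (coord_mx (c1 - r) + coord_mx (c2 - r))%MS)%N.
Proof.
have -> : c1 - c2 = (c1 - r) - (c2 - r) by rewrite opprB addrA subrK.
rewrite /rk coord_mxB; apply: mxrankS.
apply: addmx_sub_adds; first exact: submx_refl.
by rewrite eqmx_opp submx_refl.
Qed.

Lemma rk_tri c1 c2 r : (rk (c1 - c2) <= rk (c1 - r) + rk (c2 - r))%N.
Proof.
apply: leq_trans (rk_sub_le c1 c2 r) _.
have := mxrank_sum_cap (coord_mx (c1 - r)) (coord_mx (c2 - r)).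
rewrite /rk; lia.
Qed.

Lemma disj_frames c1 c2 r t k d (X : 'M[F]_(k, n)) :
  rk (c1 - r) = t -> rk (c2 - r) = t -> (d <= rk (c1 - c2))%N -> (k + d = 2 * t + 1)%N ->
  row_free X -> (X <= coord_mx (c1 - r))%MS -> (X <= coord_mx (c2 - r))%MS -> False.
Proof.
move=> h1 h2 hd hk fX s1 s2.
have hc : (k <= \rank (coord_mx (c1 - r) :&: coord_mx (c2 - r))%MS)%N.
  by rewrite -(eqnP fX); apply: mxrankS; rewrite sub_capmx s1 s2.
have := mxrank_sum_cap (coord_mx (c1 - r)) (coord_mx (c2 - r)).
have := rk_sub_le c1 c2 r.
move: h1 h2 hd; rewrite /rk => h1 h2 hd; lia.
Qed.
End Rank.

Lemma count_t (F : finFieldType) (L : fieldExtType F) (n : nat)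
  (T : seq 'rV[L]_n) r t k d q :
  #|F| = q -> uniq T -> (forall c, c \in T -> rk (c - r) = t) ->
  {in T &, forall c1 c2, c1 != c2 -> (d <= rk (c1 - c2))%N} ->
  (k + d = 2 * t + 1)%N -> (k <= t)%N -> (t <= n)%N ->
  (size T * \prod_(i < k) (q ^ t - q ^ i) <= \prod_(i < k) (q ^ n - q ^ i))%N.
Proof.
move=> hq uT hT hd hk kt tn; subst q.
pose P c := [set X : 'M[F]_(k, n) | row_free X && (X <= coord_mx (c - r))%MS].
have cP : forall c, c \in T -> #|P c| = (\prod_(i < k) (#|F| ^ t - #|F| ^ i))%N.
  move=> c cT; have e : \rank (coord_mx (c - r)) = t := hT c cT.
  by rewrite card_free_in e //; rewrite e.
rewrite -sum_const_seq.
have -> : (\sum_(c <- T) \prod_(i < k) (#|F| ^ t - #|F| ^ i))%N = (\sum_(c <- T) #|P c|)%N.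
  by apply: eq_big_seq => c cT; rewrite cP.
rewrite card_bigcup_seq //; last first.
  move=> c1 c2 c1T c2T ne; apply/setP => X; rewrite !inE.
  apply/negbTE/andP => [[/andP[fX s1] /andP[_ s2]]].
  exact: (@disj_frames F L n c1 c2 r t k d X (hT _ c1T) (hT _ c2T) (hd _ _ c1T c2T ne) hk fX s1 s2).
have -> : (\prod_(i < k) (#|F| ^ n - #|F| ^ i))%N =
   #|[set X : 'M[F]_(k, n) | row_free X && (X <= (1%:M : 'M[F]_n))%MS]|.
  by rewrite card_free_in mxrank1 //; apply: leq_trans kt tn.
apply: subset_leq_card; apply/subsetP => X /in_bigcup_seq [c cT].
by rewrite !inE => /andP[-> _]; exact: submx1.
Qed.

Lemma sum_eq_ind (x m N : nat) :
  (\sum_(m <= t < N) (x == t))%N = (m <= x < N)%N.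
Proof.
elim: N => [|N IH]; first by rewrite big_geq // andbF.
case: (leqP m N) => h.
  rewrite big_nat_recr //= IH.
  rewrite [(x < N.+1)%N]ltnS [(x <= N)%N]leq_eqVlt.
  case: (x =P N) => [->|ne] /=; first by rewrite ltnn andbF h.
  by rewrite addn0.
rewrite big_geq //.
suff -> : (m <= x < N.+1)%N = false by [].
by apply/negbTE/andP => [[h1 h2]]; lia.
Qed.

Lemma size_split (V : eqType) (s : seq V) (f : V -> nat) a tau :
  (forall c, c \in s -> f c <= tau)%N ->
  size s = (count (fun c => f c <= a) s +
            \sum_(a.+1 <= t < tau.+1) count (fun c => f c == t) s)%N.
Proof.
elim: s => [|x s IH] hs.
  by rewrite /= big1 // => t _.
have hx : (f x <= tau)%N by apply: hs; rewrite inE eqxx.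
rewrite /= IH; last by move=> c cs; apply: hs; rewrite inE cs orbT.
rewrite big_split /= sum_eq_ind.
case: (leqP (f x) a) => h /=.
  lia.
by rewrite ltnS hx; lia.
Qed.

Lemma count_small (F : finFieldType) (L : fieldExtType F) (n : nat)
  (T : seq 'rV[L]_n) r a d :
  uniq T -> (forall c, c \in T -> rk (c - r) <= a)%N ->
  {in T &, forall c1 c2, c1 != c2 -> (d <= rk (c1 - c2))%N} ->
  (2 * a < d)%N -> (size T <= 1)%N.
Proof.
case: T => [|x [|y T]] //= uT hT hd hlt.
have xy : x != y.
  by move: uT; rewrite inE negb_or => /andP[/andP[]].
have hx := hT x; have hy := hT y.
rewrite !inE eqxx /= in hx hy.
rewrite eqxx orbT in hy.
have := hd x y; rewrite !inE !eqxx orbT /= => /(_ isT isT xy).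
have := @rk_tri F L n x y r; have := hx isT; have := hy isT.
set e1 := rk (x - y); set e2 := rk (x - r); set e3 := rk (y - r); lia.
Qed.

Lemma gbin_ratio q n t k : (2 <= q)%N -> (k <= t)%N -> (t <= n)%N ->
  gbin q n k / gbin q t k =
  ((\prod_(i < k) (q ^ n - q ^ i))%N)%:R / ((\prod_(i < k) (q ^ t - q ^ i))%N)%:R :> rat.
Proof.
move=> hq hk htn.
have hQ : 2 <= q%:R :> rat by rewrite (ler_nat rat 2 q).
set Q : rat := q%:R in hQ *.
have gE : forall N, gbin q N k = \prod_(i < k) ((Q ^+ N - Q ^+ i) / (Q ^+ k - Q ^+ i)).
  by move=> N; apply: eq_bigr => i _; rewrite !natrX.
have nE : forall N, (k <= N)%N ->
    ((\prod_(i < k) (q ^ N - q ^ i))%N)%:R = \prod_(i < k) (Q ^+ N - Q ^+ i) :> rat.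
  move=> N hN; rewrite natr_prod; apply: eq_bigr => i _.
  rewrite natrB ?natrX //; apply: leq_pexp2l; first lia.
  by apply: leq_trans (ltnW (ltn_ord i)) hN.
rewrite !gE !prodf_div !nE //; last by apply: leq_trans htn.
have Pc := prod_pos Q k k hQ (leqnn k).
have Pb := prod_pos Q t k hQ hk.
by field; apply/andP; split; rewrite gt_eqF.
Qed.

Theorem theorem2 (q : nat) (F : finFieldType) (L : fieldExtType F)
    (d tau n m : nat) (C : {fset 'rV[L]_n}) :
  #|F| = q -> \dim {:L}%VS = m ->
  ((d.-1)./2 <= tau)%N -> (tau < d)%N -> (d <= n)%N -> (n <= m)%N ->
  min_rank_dist C d ->
  let a := (d.-1)./2 in
  let A : rat := 1 + \sum_(a.+1 <= t < tau.+1)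
                       gbin q n (2 * t + 1 - d) / gbin q t (2 * t + 1 - d) in
  let B : rat := 1 + 4 * \sum_(a.+1 <= t < tau.+1)
                       ((q ^ ((2 * t + 1 - d) * (n - t)))%N)%:R in
  let D : rat := 1 + 4 * (tau - a)%:R *
                       ((q ^ ((2 * tau + 1 - d) * (n - a - 1)))%N)%:R in
  [/\ forall r : 'rV[L]_n, (#|` code_ball C tau r |)%:R <= A,
      A <= B & B <= D].
Proof.
move=> hq hm h1 h2 h3 h4 [hmin _] a A B D.
have q2 : (2 <= q)%N by rewrite -hq; exact: card_finNzRing_gt1.
have ha : (a + a <= d.-1 <= a + a + 1)%N.
  rewrite /a; have := odd_double_half d.-1; rewrite -addnn; case: odd => /=; lia.
split.
- move=> r.
  set s := enum_fset (code_ball C tau r).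
  have us : uniq s := fset_uniq _.
  have ins : forall c, c \in s -> (c \in C) && (rk (c - r) <= tau)%N.
    by move=> c cs; have : c \in code_ball C tau r by []; rewrite /code_ball !inE.
  have hdist : {in s &, forall c1 c2, c1 != c2 -> (d <= rk (c1 - c2))%N}.
    by move=> c1 c2 /ins/andP[c1C _] /ins/andP[c2C _]; exact: hmin.
  rewrite (@size_split _ s (fun c => rk (c - r)) a tau); last by move=> c /ins/andP[].
  rewrite natrD natr_sum /A; apply: lerD.
    rewrite lern1 -size_filter; apply: (@count_small F L n _ r a d).
    + exact: filter_uniq.
    + by move=> c; rewrite mem_filter => /andP[].
    + move=> c1 c2; rewrite !mem_filter => /andP[_ c1s] /andP[_ c2s]; exact: hdist.
    + lia.
  apply: ler_sum_nat => t /andP[ht1 ht2].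
  have hk1 : (2 * t + 1 - d <= t)%N by lia.
  rewrite gbin_ratio //; last by lia.
  rewrite ler_pdivlMr; last first.
    rewrite ltr0n prodn_gt0 // => i; rewrite subn_gt0 ltn_exp2l //.
    by apply: leq_trans (ltn_ord i) hk1.
  rewrite -natrM ler_nat -size_filter.
  apply: (@count_t F L n _ r t (2 * t + 1 - d) d q) => //.
  + exact: filter_uniq.
  + by move=> c; rewrite mem_filter => /andP[/eqP].
  + move=> c1 c2; rewrite !mem_filter => /andP[_ c1s] /andP[_ c2s]; exact: hdist.
  + lia.
  + lia.
- rewrite /A /B lerD2l mulr_sumr.
  apply: ler_sum_nat => t /andP[ht1 ht2].
  apply: term_le => //; lia.
- rewrite /B /D lerD2l -mulrA ler_pM2l; last by [].
  rewrite -natr_sum -natrM ler_nat.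
  apply: (@leq_trans (\sum_(a.+1 <= t < tau.+1) q ^ ((2 * tau + 1 - d) * (n - a - 1)))%N).
    rewrite big_nat_cond [X in (_ <= X)%N]big_nat_cond.
    apply: leq_sum => t /andP[/andP[ht1 ht2] _].
    apply: leq_pexp2l; first lia.
    apply: leq_mul; lia.
  by rewrite sum_nat_const_nat subSS.
Qed.
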